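(* Let $\mathcal{N}=\{1,\dots,N\}$, $G$ a positive integer, $D>0$, and for each $n\in\mathcal{N}$ let $\rho_n>0$, $E_n>0$, $C_n\in\mathbb{R}$, $p\in\mathbb{R}$. Consider the game in which each client $n$ chooses $x_n\in[0,D]$ to minimize $F_n(\boldsymbol{x})=\rho_n\left(\frac{1}{\sqrt{G\sum_{n'\in\mathcal{N}}x_{n'}}}+\frac{1}{G}\right)+E_nx_n+C_n+p$. If $\frac{\rho_1}{E_1}<\frac{\rho_2}{E_2}<\cdots<\frac{\rho_N}{E_N}$, then this game has a unique Nash equilibrium.
   Context: The cost $F_n$ is $+\infty$ when $\sum_{n'}x_{n'}=0$. A Nash equilibrium is a profile $\boldsymbol{x}^*\in[0,D]^N$ such that for every $n$, $F_n(x_n^*,\boldsymbol{x}^*_{-n})\le F_n(x_n,\boldsymbol{x}^*_{-n})$ for all $x_n\in[0,D]$. *)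

(* Defs.v *)
From mathcomp Require Import all_boot all_order all_algebra.
From mathcomp Require Import all_reals ereal.
Set Implicit Arguments. Unset Strict Implicit. Unset Printing Implicit Defensive.
Import Order.TTheory GRing.Theory Num.Theory.
Local Open Scope ring_scope.

Definition cost (R : realType) (N G : nat) (rho E C : 'I_N -> R) (p : R)
    (x : {ffun 'I_N -> R}) (n : 'I_N) : \bar R :=
  let S := \sum_(m < N) x m in
  if S == 0 then +oo%E
  else (rho n * (1 / Num.sqrt (G%:R * S) + 1 / G%:R) + E n * x n + C n + p)%:E.

Definition upd (R : realType) (N : nat) (x : {ffun 'I_N -> R}) (n : 'I_N) (y : R)
  : {ffun 'I_N -> R} := [ffun m => if m == n then y else x m].

Definition is_NE (R : realType) (N G : nat) (D : R) (rho E C : 'I_N -> R) (p : R)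
    (x : {ffun 'I_N -> R}) : Prop :=
  (forall n, 0 <= x n <= D) /\
  forall n (y : R), 0 <= y <= D ->
    (cost G rho E C p x n <= cost G rho E C p (upd x n y) n)%E.

(* Main.v *)
Require Import Defs.
From mathcomp Require Import all_boot all_order all_algebra.
From mathcomp Require Import all_reals ereal.
From mathcomp Require Import ring lra zify.
Import Order.TTheory GRing.Theory Num.Theory.
Local Open Scope ring_scope.
Set Implicit Arguments. Unset Strict Implicit.

Lemma core (R: realType) (e g t a b : R) : 0<e -> 0<g -> 0<t -> 0<a -> 0<b ->
  (b<a <= t \/ t <= a < b) ->
  (2*e*g*t^+3) * (1/(g*a)) + e*a^+2 < (2*e*g*t^+3)*(1/(g*b)) + e*b^+2.
Proof.
move=> e0 g0 t0 a0 b0 H.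
rewrite -subr_gt0.
have -> : (2*e*g*t^+3)*(1/(g*b)) + e*b^+2 - ((2*e*g*t^+3) * (1/(g*a)) + e*a^+2)
   = e*((a-b)*(2*t^+3 - a*b*(a+b))) / (a*b).
  by field; rewrite ?mulf_neq0 ?gt_eqF.
apply: divr_gt0; last exact: mulr_gt0.
apply: mulr_gt0 => //.
case: H => [/andP[ba at_]|/andP[ta ab]].
- have h3 : a^+3 <= t^+3 by rewrite ler_pXn2r // ?nnegrE ltW.
  apply: mulr_gt0; first lra.
  have : a*b*(a+b) < 2 * a^+3.
    rewrite -subr_gt0.
    have -> : 2 * a^+3 - a*b*(a+b) = (a-b)*(2*a + b)*a by ring.
    apply: mulr_gt0 => //; apply: mulr_gt0; lra.
  lra.
- have h3 : t^+3 <= a^+3 by rewrite ler_pXn2r // ?nnegrE ltW.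
  have : 2 * a^+3 < a*b*(a+b).
    rewrite -subr_gt0.
    have -> : a*b*(a+b) - 2 * a^+3 = (b-a)*(2*a + b)*a by ring.
    apply: mulr_gt0 => //; apply: mulr_gt0; lra.
  move=> h; rewrite -mulrNN; apply: mulr_gt0; lra.
Qed.

Definition phi (R : realType) (G:nat) (r e a : R) := r * (1 / Num.sqrt (G%:R * a)) + e * a.

Lemma phi_lt (R : realType) G (r e t a b : R) : (0<G)%N -> 0<e -> 0<t ->
  r = 2*e*Num.sqrt G%:R * t^+3 -> 0<b -> (b<a <= t^+2 \/ t^+2 <= a < b) ->
  phi G r e a < phi G r e b.
Proof.
move=> G0 e0 t0 -> b0 H.
have t20 : 0 < t^+2 by rewrite exprn_gt0.
have a0 : 0 < a by case: H => /andP[]; lra.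
have g0 : 0 < Num.sqrt (G%:R : R) by rewrite sqrtr_gt0 ltr0n.
rewrite /phi !sqrtrM ?ler0n //.
rewrite -{2}(sqr_sqrtr (ltW a0)) -{2}(sqr_sqrtr (ltW b0)).
have st : Num.sqrt (t^+2) = t by rewrite sqrtr_sqr gtr0_norm.
apply: core => //; rewrite ?sqrtr_gt0 //.
case: H => /andP[h1 h2]; [left|right]; apply/andP; split.
- by rewrite ltr_sqrt.
- by rewrite -st ler_sqrt // ltW.
- by rewrite -st ler_sqrt // ltW.
- by rewrite ltr_sqrt.
Qed.

Lemma phi_le (R : realType) G (r e t a b : R) : (0<G)%N -> 0<e -> 0<t ->
  r = 2*e*Num.sqrt G%:R * t^+3 -> 0<b -> (b<=a <= t^+2 \/ t^+2 <= a <= b) ->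
  phi G r e a <= phi G r e b.
Proof.
move=> G0 e0 t0 hr b0 H.
have [->|ne] := eqVneq a b; first by [].
apply/ltW/(phi_lt G0 e0 t0 hr b0).
case: H => /andP[h1 h2].
  by left; rewrite h2 andbT lt_neqAle eq_sym ne h1.
by right; rewrite h1 /= lt_neqAle ne h2.
Qed.

Lemma cbrt_ex (R : realType) (c : R) : exists t : R, 0 < c -> 0 < t /\ t^+3 = c.
Proof.
have [c0|c0] := ltP 0 c; last by exists 0 => h; lra.
have : exists2 x, 0 <= x <= 1 + c & root ('X^3 - c%:P) x.
  apply: poly_ivt; first lra.
  rewrite !hornerE expr0n /= sub0r oppr_le0 (ltW c0) /= subr_ge0.
  have h1 : 1 + c <= (1 + c)^+3.
    rewrite -{1}(expr1 (1+c)); apply: ler_eXn2l => //; lra.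
  lra.
move=> [x /andP[x0 _] /rootP]; rewrite !hornerE => /eqP; rewrite subr_eq0 => /eqP hx.
exists x => _; split => //.
rewrite lt_neqAle x0 andbT; apply/eqP => x00; move: hx; rewrite -x00 expr0n /=; lra.
Qed.

Section Game.
Variables (R : realType) (N G : nat) (D p : R) (rho E C : 'I_N -> R) (tau : 'I_N -> R).
Hypothesis G0 : (0 < G)%N.
Hypothesis D0 : 0 < D.
Hypothesis E0 : forall n, 0 < E n.
Hypothesis tau0 : forall n, 0 < tau n.
Hypothesis taur : forall n, rho n = 2 * E n * Num.sqrt (G%:R : R) * tau n ^+ 3.
Hypothesis Tmono : forall i j : 'I_N, (i < j)%N -> tau i ^+ 2 < tau j ^+ 2.

Let T n := tau n ^+ 2.
Let S (x : {ffun 'I_N -> R}) := \sum_(m < N) x m.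
Let ph n a := phi G (rho n) (E n) a.

Lemma T0 n : 0 < T n. Proof. by rewrite /T exprn_gt0. Qed.

Lemma phlt n a b : 0 < b -> (b < a <= T n \/ T n <= a < b) -> ph n a < ph n b.
Proof. by move=> b0 H; apply: (phi_lt G0 (E0 n) (tau0 n) (taur n) b0 H). Qed.

Lemma phle n a b : 0 < b -> (b <= a <= T n \/ T n <= a <= b) -> ph n a <= ph n b.
Proof. by move=> b0 H; apply: (phi_le G0 (E0 n) (tau0 n) (taur n) b0 H). Qed.

Lemma sum_upd (x : {ffun 'I_N -> R}) (n : 'I_N) (y : R) : S (upd x n y) = S x - x n + y.
Proof.
rewrite /S (bigD1 n) //= [in RHS](bigD1 n) //= ffunE eqxx.
rewrite (eq_bigr (fun m => x m)); last by move=> m /negbTE hm; rewrite ffunE hm.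
by rewrite addrC (addrC (x n)) addrK.
Qed.

Lemma others_ge0 (x : {ffun 'I_N -> R}) (n : 'I_N) : (forall m, 0 <= x m) -> 0 <= S x - x n.
Proof.
move=> h; rewrite /S (bigD1 n) //= addrAC subrr add0r.
by apply: sumr_ge0 => m _.
Qed.

Lemma cmp (x : {ffun 'I_N -> R}) (n : 'I_N) (y : R) : 0 < S x -> 0 < S x - x n + y ->
  (cost G rho E C p x n <= cost G rho E C p (upd x n y) n)%E =
  (ph n (S x) <= ph n (S x - x n + y)).
Proof.
move=> h1 h2.
rewrite /cost -/(S x) -/(S (upd x n y)) sum_upd (gt_eqF h1) (gt_eqF h2) lee_fin.
rewrite ffunE eqxx /ph /phi.
by apply/idP/idP => H; lra.
Qed.

Definition conds (x : {ffun 'I_N -> R}) :=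
  [/\ (forall m, 0 <= x m <= D), 0 < S x,
      (forall m, 0 < x m -> S x <= T m) & (forall m, x m < D -> T m <= S x)].

Lemma NE_pos (x : {ffun 'I_N -> R}) (n0 : 'I_N) : is_NE G D rho E C p x -> 0 < S x.
Proof.
move=> [hb hne].
have hx0 : forall m, 0 <= x m by move=> m; case/andP: (hb m).
have s0 := others_ge0 n0 hx0.
have [//|] := ltP 0 (S x) => hle.
have S0 : S x = 0 by apply/le_anti; rewrite hle /S sumr_ge0.
have := hne n0 D; rewrite /cost -/(S x) -/(S (upd x n0 D)) sum_upd S0 eqxx.
have -> : (0 - x n0 + D == 0) = false.
  apply/gt_eqF; rewrite S0 sub0r in s0 *.
  by apply: (lt_le_trans D0); rewrite -[X in X <= _]add0r lerD2r.
by rewrite leye_eq => /(_ _)/eqP; rewrite (ltW D0) lexx; move/(_ isT).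
Qed.

Lemma NE_cond1 (x : {ffun 'I_N -> R}) (n : 'I_N) : is_NE G D rho E C p x -> 0 < S x -> 0 < x n -> S x <= T n.
Proof.
move=> [hb hne] Sp xn0.
have hx0 : forall m, 0 <= x m by move=> m; case/andP: (hb m).
have s0 := others_ge0 n hx0.
have xD : x n <= D by case/andP: (hb n).
have Tp := T0 n.
rewrite leNgt; apply/negP => TS.
have [Ts|sT] := leP (T n) (S x - x n).
- have hz : 0 < S x - x n + 0 by lra.
  have := hne n 0; rewrite cmp // addr0.
  have hy : 0 <= (0:R) <= D by apply/andP; split; lra.
  move=> /(_ hy) H.
  have : ph n (S x - x n) < ph n (S x) by apply: phlt => //; right; apply/andP; split; lra.
  move=> h1; lra.
- have hz : 0 < S x - x n + (T n - (S x - x n)) by lra.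
  have := hne n (T n - (S x - x n)); rewrite cmp //.
  have -> : S x - x n + (T n - (S x - x n)) = T n by ring.
  have : ph n (T n) < ph n (S x) by apply: phlt => //; right; apply/andP; split; lra.
  have hy : 0 <= T n - (S x - x n) <= D by apply/andP; split; lra.
  move=> h1 /(_ hy) h2; lra.
Qed.

Lemma NE_cond2 (x : {ffun 'I_N -> R}) (n : 'I_N) : is_NE G D rho E C p x -> 0 < S x -> x n < D -> T n <= S x.
Proof.
move=> [hb hne] Sp xnD.
have hx0 : forall m, 0 <= x m by move=> m; case/andP: (hb m).
have s0 := others_ge0 n hx0.
have Tp := T0 n. have xn0 := hx0 n.
rewrite leNgt; apply/negP => ST.
have [Ts|sT] := leP (S x - x n + D) (T n).
- have hz : 0 < S x - x n + D by lra.
  have := hne n D; rewrite cmp //.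
  have : ph n (S x - x n + D) < ph n (S x) by apply: phlt => //; left; apply/andP; split; lra.
  have hy : 0 <= D <= D by rewrite lexx (ltW D0).
  move=> h1 /(_ hy) h2; lra.
- have hz : 0 < S x - x n + (T n - (S x - x n)) by lra.
  have := hne n (T n - (S x - x n)); rewrite cmp //.
  have -> : S x - x n + (T n - (S x - x n)) = T n by ring.
  have : ph n (T n) < ph n (S x) by apply: phlt => //; left; apply/andP; split; lra.
  have hy : 0 <= T n - (S x - x n) <= D by apply/andP; split; lra.
  move=> h1 /(_ hy) h2; lra.
Qed.

Lemma NE_conds (x : {ffun 'I_N -> R}) (n0 : 'I_N) : is_NE G D rho E C p x -> conds x.
Proof.
move=> hne; have Sp := NE_pos n0 hne.
split => //; first by case: hne.
- by move=> m; apply: NE_cond1.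
- by move=> m; apply: NE_cond2.
Qed.

Lemma conds_NE (x : {ffun 'I_N -> R}) : conds x -> is_NE G D rho E C p x.
Proof.
move=> [hb Sp c1 c2]; split => // n y /andP[y0 yD].
have hx0 : forall m, 0 <= x m by move=> m; case/andP: (hb m).
have s0 := others_ge0 n hx0.
have [xn0 xnD] : 0 <= x n /\ x n <= D by case/andP: (hb n).
have Tp := T0 n.
have [z0|zp] := eqVneq (S x - x n + y) 0.
  by rewrite /cost -/(S (upd x n y)) sum_upd z0 eqxx leey.
have zpos : 0 < S x - x n + y by rewrite lt_neqAle eq_sym zp /=; lra.
rewrite cmp //.
have [ST|TS|ST] := ltgtP (S x) (T n).
- have xD : x n = D.
    apply/le_anti; rewrite xnD /= leNgt; apply/negP => h; have := c2 n h; lra.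
  by apply: phle => //; left; apply/andP; split; lra.
- have x0 : x n = 0.
    apply/le_anti; rewrite xn0 andbT leNgt; apply/negP => h; have := c1 n h; lra.
  by apply: phle => //; right; apply/andP; split; lra.
- have [zT|Tz] := leP (S x - x n + y) (T n).
  + by apply: phle => //; left; apply/andP; split; lra.
  + by apply: phle => //; right; apply/andP; split; lra.
Qed.

Lemma Tinj (i j : 'I_N) : i != j -> T i != T j.
Proof.
move=> ij; rewrite /T; have [h|h|h] := ltngtP i j.
- by rewrite (lt_eqF (Tmono h)).
- by rewrite eq_sym (lt_eqF (Tmono h)).
- by move: ij; rewrite (val_inj h) eqxx.
Qed.

Lemma conds_uniq (x y : {ffun 'I_N -> R}) : conds x -> conds y -> x = y.
Proof.
have key : forall x y, conds x -> conds y -> S x < S y -> False.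
  move=> x' y' [hb Sp c1 c2] [hb' Sp' c1' c2'] lt.
  have : S y' <= S x'.
    apply: ler_sum => m _.
    have [h|h] := leP (y' m) 0; first by case/andP: (hb m) => h1 _; lra.
    have := c1' m h => h1.
    have : ~~ (x' m < D) by apply/negP => h2; have := c2 m h2; lra.
    rewrite -leNgt => h2; case/andP: (hb' m); lra.
  lra.
move=> cx cy.
have eqS : S x = S y.
  by have [h|h|//] := ltgtP (S x) (S y); [case: (key _ _ cx cy h)|case: (key _ _ cy cx h)].
case: cx => hb Sp c1 c2; case: cy => hb' Sp' c1' c2'.
have off : forall m, T m != S x -> x m = y m.
  move=> m; have [h|h|h] := ltgtP (T m) (S x); last by [].
  - move=> _; have a : x m = 0.
      apply/le_anti; case/andP: (hb m) => -> _; rewrite andbT leNgt; apply/negP => h1.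
      have := c1 m h1; lra.
    have b : y m = 0.
      apply/le_anti; case/andP: (hb' m) => -> _; rewrite andbT leNgt; apply/negP => h1.
      have := c1' m h1; lra.
    by rewrite a b.
  - move=> _; have a : x m = D.
      apply/le_anti; case/andP: (hb m) => _ ->; rewrite leNgt; apply/negP => h1.
      have := c2 m h1; lra.
    have b : y m = D.
      apply/le_anti; case/andP: (hb' m) => _ ->; rewrite leNgt; apply/negP => h1.
      have := c2' m h1; lra.
    by rewrite a b.
apply/ffunP => m.
have [hm|hm] := eqVneq (T m) (S x); last exact: off.
move: eqS; rewrite /S (bigD1 m) //= [X in _ = X](bigD1 m) //=.
rewrite (eq_bigr (fun k => y k)); first by move=> h; apply/(addIr _ h).
move=> k km; apply: off; rewrite -hm; exact: Tinj.
Qed.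


Lemma sum_step (M j : nat) (v : R) : (j < M)%N ->
  \sum_(m < M) (if (m < j)%N then 0 else if (m == j :> nat) then v else D)
  = v + (M - j.+1)%:R * D.
Proof.
elim: M => [//|M IH] hj; rewrite big_ord_recr /=.
have [h|h|h] := ltngtP j M.
  rewrite IH //.
  have e : (M.+1 - j.+1 = (M - j.+1).+1)%N by lia.
  rewrite e -natr1; lra.
- by move: hj; rewrite ltnS leqNgt h.
- rewrite -h subnn mul0r addr0 big1 ?add0r // => i _.
  by rewrite ltn_ord.
Qed.

Lemma exists_conds (n0 : 'I_N) : exists x, conds x.
Proof.
have D0' := D0.
have hN : (N.-1 < N)%N by rewrite ltn_predL (leq_ltn_trans (leq0n _) (ltn_ord n0)).
pose i0 : 'I_N := Ordinal hN.
pose W (j : nat) : R := (N - j.+1)%:R * D.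
have W0 : forall j, 0 <= W j by move=> j; rewrite /W mulr_ge0 // ltW.
have Pi0 : W i0 <= T i0.
  rewrite /W /= prednK ?(leq_ltn_trans (leq0n _) (ltn_ord n0)) // subnn mul0r.
  exact: ltW (T0 _).
have WS : forall j : nat, (0 < j)%N -> (j < N)%N -> W j.-1 = W j + D.
  move=> j jp jN; rewrite /W prednK //.
  have e : (N - j = (N - j.+1).+1)%N by (try clearbody x); (try clearbody i0); lia.
  by rewrite e -natr1 mulrDl mul1r.
case: (@arg_minnP _ i0 (fun j : 'I_N => W j <= T j) (fun j : 'I_N => (j : nat)) Pi0) => j0 Pj0 minj.
have Pj : W j0 <= T j0 := Pj0.
pose S0 := if T j0 <= W j0 + D then T j0 else W j0 + D.
pose v := S0 - W j0.
pose x := [ffun m : 'I_N => if (m < j0)%N then 0 else if (m == j0 :> nat) then v else D].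
have Tj0 := T0 j0. have Wj0 := W0 j0.
have hS : S x = S0.
  rewrite /S (eq_bigr (fun m : 'I_N => if (m < j0)%N then 0 else if (m == j0 :> nat) then v else D)).
    by rewrite sum_step // /v /W subrK.
  by move=> m _; rewrite ffunE.
have hS0 : (T j0 <= W j0 + D /\ S0 = T j0) \/ (W j0 + D < T j0 /\ S0 = W j0 + D).
  by rewrite /S0; case: leP; [left|right].
have hv' : v = S0 - W j0 by [].
clearbody W S0 v.
have hv : 0 <= v <= D.
  by case: hS0 => [[h e]|[h e]]; apply/andP; split; (try clearbody x); (try clearbody i0); lra.
exists x; split.
- move=> m; rewrite ffunE; case: ifP => _; first by rewrite lexx ltW.
  by case: ifP => _ //; rewrite lexx ltW.
- by rewrite hS; case: hS0 => [[h e]|[h e]]; (try clearbody x); (try clearbody i0); lra.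
- move=> m; rewrite hS ffunE.
  case: ifP => [_|hm1]; first by rewrite ltxx.
  have hS1 : S0 <= T j0 by case: hS0 => [[h e]|[h e]]; (try clearbody x); (try clearbody i0); lra.
  case: ifP => [/eqP hm2 _|hm2 _].
    by have -> : m = j0 by apply: val_inj.
  have : (j0 < m)%N by move: hm1 hm2 => /negbT; rewrite -leqNgt leq_eqVlt eq_sym => /orP[->|].
  move=> /Tmono; rewrite -/(T j0) -/(T m) => h; (try clearbody x); (try clearbody i0); lra.
- move=> m; rewrite hS ffunE.
  case: ifP => [hm1 _|hm1].
    have j0p : (0 < j0)%N by (try clearbody x); (try clearbody i0); lia.
    have hk : (j0.-1 < N)%N by rewrite (leq_ltn_trans (leq_pred j0) (ltn_ord j0)).
    pose k : 'I_N := Ordinal hk.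
    have nPk : T k < W k.
      rewrite ltNge; apply/negP => Pk; have := minj k Pk; rewrite /= => h; (try clearbody x); (try clearbody i0); lia.
    have Wk : W k = W j0 + D by apply: WS.
    have Tmk : T m <= T k.
      have [e|lt] := eqVneq (m : nat) k.
        by have -> : m = k by apply: val_inj.
      have hk1 : (k : nat) = j0.-1 by []. move: lt => /eqP lt.
      apply/ltW/Tmono; clearbody k x i0; lia.
    have Tmj : T m < T j0 by apply: Tmono.
    by case: hS0 => [[h e]|[h e]]; (try clearbody x); (try clearbody i0); lra.
  case: ifP => [/eqP hm2|hm2]; last by rewrite ltxx.
  have -> : m = j0 by apply: val_inj.
  by case: hS0 => [[h e]|[h e]]; (try clearbody x); (try clearbody i0); lra.
Qed.

End Game.

Theorem theorem2 (R : realType) (N G : nat) (D p : R) (rho E C : 'I_N -> R) :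
  (0 < G)%N -> 0 < D ->
  (forall n, 0 < rho n) -> (forall n, 0 < E n) ->
  (forall i j : 'I_N, (i < j)%N -> rho i / E i < rho j / E j) ->
  exists x : {ffun 'I_N -> R},
    is_NE G D rho E C p x /\ forall y, is_NE G D rho E C p y -> y = x.
Proof.
move=> G0 D0 rho0 E0 mono.
have [N0|Np] := posnP N.
  exists [ffun => 0]; split.
    by split => n; have : (n < N)%N := ltn_ord n; rewrite [X in (_ < X)%N]N0.
  by move=> y _; apply/ffunP => n; have : (n < N)%N := ltn_ord n; rewrite [X in (_ < X)%N]N0.
pose n0 : 'I_N := Ordinal Np.
pose g := Num.sqrt (G%:R : R).
have g0 : 0 < g by rewrite sqrtr_gt0 ltr0n.
have hpos : forall n, 0 < rho n / (2 * E n * g) by move=> n; rewrite divr_gt0 // !mulr_gt0.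
have cb : forall n, exists t : R, (0 < t) && (t ^+ 3 == rho n / (2 * E n * g)).
  move=> n; have [t /(_ (hpos n)) [t0 t3]] := cbrt_ex (rho n / (2 * E n * g)).
  by exists t; rewrite t0 t3 eqxx.
pose tau n := xchoose (cb n).
have htau : forall n, 0 < tau n /\ tau n ^+ 3 = rho n / (2 * E n * g).
  by move=> n; have /andP[h1 /eqP h2] := xchooseP (cb n).
have tau0 : forall n, 0 < tau n by move=> n; case: (htau n).
have taur : forall n, rho n = 2 * E n * Num.sqrt (G%:R : R) * tau n ^+ 3.
  move=> n; rewrite -/g (htau n).2; field.
  by rewrite ?mulf_neq0 ?gt_eqF.
have Tmono : forall i j : 'I_N, (i < j)%N -> tau i ^+ 2 < tau j ^+ 2.
  move=> i j ij.
  have e : forall n, rho n / (2 * E n * g) = (rho n / E n) * (2 * g)^-1.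
    by move=> n; field; rewrite ?mulf_neq0 ?gt_eqF.
  have h3 : tau i ^+ 3 < tau j ^+ 3.
    rewrite (htau i).2 (htau j).2 !e ltr_pM2r ?invr_gt0 ?mulr_gt0 //.
    exact: mono.
  have h1 : tau i < tau j.
    by move: h3; rewrite ltr_pXn2r // nnegrE ltW.
  by rewrite ltr_pXn2r // nnegrE ltW.
have [x cx] := exists_conds G0 D0 tau0 Tmono n0.
exists x; split; first exact: (conds_NE p C G0 E0 tau0 taur cx).
move=> y hy.
have cy := NE_conds G0 D0 E0 tau0 taur n0 hy.
exact: (conds_uniq Tmono cy cx).
Qed.
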